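(* Assume the genus expansion hypothesis (H$_G$). Let $\alpha\in U$ and $\xi>0$, and set $\gamma=\alpha^{\nu-1}/\xi$. Then for every integer $m\ge0$ there is a constant $K_{5,m}(\alpha,\gamma)$ such that, for all sufficiently large $n$, $$\Big|x_{n,\frac n\alpha,\frac{n^{\nu-1}}{\xi}}-\alpha\sum_{g=0}^m\frac{Z_g(\gamma n^{\nu-1})}{n^{2g}}\Big|<\frac{K_{5,m}(\alpha,\gamma)}{n^{2m+2+\frac{\nu-1}{\nu}}}.$$
   Context: Fix an integer $\nu\ge2$. For $N,r>0$ let $w_{N,r}(\lambda)=\exp[-N(\lambda^2/2+r\lambda^{2\nu}/(2\nu))]$, and let $x_{n,N,r}=b_n^2$ be the recurrence coefficients of the monic orthogonal polynomials: $\lambda\pi_n=\pi_{n+1}+b_n^2\pi_{n-1}$. Let $c_\nu=\binom{2\nu-1}{\nu-1}$. For $y\ge0$ let $Z_0(y)$ be the unique root in $(0,1]$ of $1=Z+c_\nu yZ^\nu$. For $g\ge1$ set $$Z_g(y)=\frac{Z_0(y)(Z_0(y)-1)P_{3g-2,\nu}(Z_0(y))}{(\nu-(\nu-1)Z_0(y))^{5g-1}},$$ where the $P_{3g-2,\nu}$ are fixed real polynomials of degree $3g-2$ (these are the generating functions for $2\nu$-valent 2-legged genus-$g$ maps). For fixed $\gamma>0$, $Z_g(\gamma n^{\nu-1})$ has a convergent expansion $\sum_{i\ge\nu-1}a_{i,g,\nu}(\gamma)n^{-i/\nu}$ for large $n$; in particular $Z_g(\gamma n^{\nu-1})=O(n^{-(\nu-1)/\nu})$.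 Hypothesis (H$_G$), the genus expansion: there is a neighborhood $U$ of $1$ such that for each $\alpha\in U$ and each integer $m\ge0$ there exist $K_{1,m}(\alpha)$ and $n_0$ such that, for all $n\ge n_0$ and all $r>0$, $$\Big|x_{n,n/\alpha,r}-\alpha\sum_{g=0}^m\frac{Z_g(\alpha^{\nu-1}r)}{n^{2g}}\Big|<\frac{K_{1,m}(\alpha)}{n^{2m+2}}.$$ *)

(* Defs.v *)
From HB Require Import structures.
From mathcomp Require Import all_boot all_order all_algebra.
From mathcomp Require Import all_classical all_reals all_analysis.
Set Implicit Arguments. Unset Strict Implicit. Unset Printing Implicit Defensive.
Import Order.TTheory GRing.Theory Num.Theory.
Import numFieldNormedType.Exports.
Local Open Scope classical_set_scope.
Local Open Scope ring_scope.

Section Defs.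
Variable R : realType.

Definition weight (nu : nat) (N r t : R) : R :=
  expR (- (N * (t ^+ 2 / 2 + r * t ^+ (2 * nu) / (2 * nu)%:R))).

Definition is_rec_coeff (nu : nat) (x : nat -> R -> R -> R) : Prop :=
  forall N r : R, 0 < N -> 0 < r ->
  exists pi : nat -> {poly R},
    (forall k, pi k \is monic /\ size (pi k) = k.+1) /\
    (forall j k, j != k ->
       (\int[@lebesgue_measure R]_t
          ((pi j).[t] * (pi k).[t] * weight nu N r t)%:E = 0)%E) /\
    (forall n, (0 < n)%N -> 'X * pi n = pi n.+1 + x n N r *: pi n.-1).

Definition cnu (nu : nat) : R := ('C(2 * nu - 1, nu - 1))%:R.

Definition Z0 (nu : nat) (y : R) : R :=
  xget 1 [set z : R | 0 < z <= 1 /\ 1 = z + cnu nu * y * z ^+ nu].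

(* Z_g(y), with P g standing for P_{3g-2,nu} *)
Definition Zg (nu : nat) (P : nat -> {poly R}) (g : nat) (y : R) : R :=
  if g is 0 then Z0 nu y
  else Z0 nu y * (Z0 nu y - 1) * (P g).[Z0 nu y] /
       (nu%:R - (nu - 1)%:R * Z0 nu y) ^+ (5 * g - 1).

Definition genus_expansion (nu : nat) (x : nat -> R -> R -> R)
    (P : nat -> {poly R}) (U : set R) : Prop :=
  forall a, U a -> forall m : nat,
  exists K : R, exists n0 : nat, forall n : nat, (n0 <= n)%N ->
  forall r : R, 0 < r ->
    `| x n (n%:R / a) r
       - a * \sum_(g < m.+1) Zg nu P g (a ^+ (nu - 1) * r) / n%:R ^+ (2 * g) |
    < K / n%:R ^+ (2 * m + 2).

End Defs.

(* Main.v *)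
Require Import Defs.
From HB Require Import structures.
From mathcomp Require Import all_boot all_order all_algebra.
From mathcomp Require Import all_classical all_reals all_analysis.
From mathcomp Require Import ring lra zify.
Import Order.TTheory GRing.Theory Num.Theory.
Import numFieldNormedType.Exports.
Local Open Scope classical_set_scope.
Local Open Scope ring_scope.

Section H.
Variable R : realType.

Lemma Z0_spec (nu : nat) (y : R) : Z0 nu y = 1 \/
  (0 < Z0 nu y <= 1 /\ 1 = Z0 nu y + cnu R nu * y * Z0 nu y ^+ nu).
Proof. by rewrite /Z0; case: xgetP => [z _ Pz|_]; [right|left]. Qed.

Lemma Z0_range (nu : nat) (y : R) : 0 < Z0 nu y <= 1.
Proof. by case: (Z0_spec nu y) => [->|[]//]; rewrite ltr01 lexx. Qed.

Lemma cnu_gt0 nu : 0 < cnu R nu.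
Proof. by rewrite /cnu ltr0n bin_gt0; lia. Qed.

Lemma horner_bound (p : {poly R}) z : 0 <= z <= 1 ->
  `|p.[z]| <= \sum_(i < size p) `|p`_i|.
Proof.
move=> /andP[z0 z1]; rewrite horner_coef.
apply: (le_trans (ler_norm_sum _ _ _)); apply: ler_sum => i _.
rewrite normrM normrX (ger0_norm z0).
by rewrite ler_piMr // exprn_ile1.
Qed.

Lemma Zg_one nu P g y : (0 < g)%N -> Z0 nu y = 1 -> Zg nu P g y = 0 :> R.
Proof. by case: g => // g _; rewrite /Zg => ->; rewrite subrr mulr0 !mul0r. Qed.

Lemma Zg_bound nu (P : nat -> {poly R}) g y : (1 <= nu)%N -> (0 < g)%N ->
  `|Zg nu P g y| <= (\sum_(i < size (P g)) `|(P g)`_i|) * Z0 nu y.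
Proof.
move=> hnu; case: g => // g _; rewrite /Zg.
have /andP[z0 z1] := Z0_range nu y.
set z := Z0 nu y; set M := \sum_(i < _) _.
have hz : 0 <= z <= 1 by rewrite (ltW z0) z1.
have hM := horner_bound (P g.+1) z hz.
have hM0 : 0 <= M by apply: le_trans hM.
have hd : 1 <= nu%:R - (nu - 1)%:R * z.
  rewrite natrB // -/z.
  have : 1 <= nu%:R :> R by rewrite ler1n.
  nra.
rewrite normf_div normrX.
have hd1 : 1 <= `|nu%:R - (nu - 1)%:R * z| ^+ (5 * g.+1 - 1).
  by rewrite exprn_ege1 // ger0_norm // (le_trans ler01).
rewrite ler_pdivrMr ?(lt_le_trans ltr01) //.
rewrite !normrM (gtr0_norm z0) ler0_norm ?subr_le0 //.
set B := `|_| ^+ _ in hd1 *.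
set Q := `|_| in hM *.
rewrite -/z -/M in hM *.
have hQ : 0 <= Q by rewrite normr_ge0.
have h1 : z * - (z - 1) * Q <= z * Q by rewrite -!mulrA ler_pM2l // ler_piMl //; lra.
have h2 : z * Q <= M * z by rewrite mulrC ler_pM2r.
apply: (le_trans h1); apply: (le_trans h2); rewrite ler_peMr //; nra.
Qed.

Lemma Z0_decay nu (g n : R) : (1 <= nu)%N -> 0 < n ->
  Z0 nu (g * n ^+ (nu - 1)) != 1 ->
  Z0 nu (g * n ^+ (nu - 1)) * n `^ ((nu - 1)%:R / nu%:R)
    <= ((cnu R nu * `|g|)^-1) `^ (nu%:R^-1).
Proof.
move=> hnu n0; case: (Z0_spec nu (g * n ^+ (nu - 1))) => [->|[/andP[z0 z1] he]].
  by rewrite eqxx.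
set z := Z0 _ _ in z0 z1 he *; move=> zn1.
have zlt1 : z < 1 by rewrite lt_neqAle zn1 z1.
have c0 := cnu_gt0 nu.
have hX : 0 < cnu R nu * (g * n ^+ (nu - 1)) * z ^+ nu by lra.
have g0 : 0 < g.
  have hp : 0 < cnu R nu * n ^+ (nu - 1) * z ^+ nu by rewrite !mulr_gt0 // exprn_gt0.
  have e : cnu R nu * (g * n ^+ (nu - 1)) * z ^+ nu = g * (cnu R nu * n ^+ (nu - 1) * z ^+ nu) by ring.
  by rewrite e pmulr_lgt0 in hX.
rewrite (gtr0_norm g0).
have nu0 : nu%:R != 0 :> R by rewrite pnatr_eq0 -lt0n.
have hw : (z * n `^ ((nu - 1)%:R / nu%:R)) ^+ nu = z ^+ nu * n ^+ (nu - 1).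
  rewrite exprMn -[(n `^ _) ^+ nu]powR_mulrn ?powR_ge0 // -powRrM divfK // powR_mulrn //.
  exact: ltW.
have w0 : 0 <= z * n `^ ((nu - 1)%:R / nu%:R) by rewrite mulr_ge0 ?powR_ge0 // ltW.
set w := z * _ in hw w0 *.
have hw2 : w ^+ nu <= (cnu R nu * g)^-1.
  rewrite -[(_)^-1]mul1r ler_pdivlMr ?mulr_gt0 // hw.
  have -> : z ^+ nu * n ^+ (nu - 1) * (cnu R nu * g) = cnu R nu * (g * n ^+ (nu - 1)) * z ^+ nu by ring.
  lra.
have -> : w = (w ^+ nu) `^ (nu%:R^-1).
  by rewrite -powR_mulrn // -powRrM mulfV // powRr1.
apply: ge0_ler_powR; rewrite ?nnegrE ?invr_ge0 ?ler0n ?exprn_ge0 //.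
by rewrite ltW // mulr_gt0.
Qed.
End H.

Theorem lemmaA2 (R : realType) (nu : nat) (hnu : (2 <= nu)%N)
  (P : nat -> {poly R}) (hP : forall g, (1 <= g)%N -> size (P g) = (3 * g - 1)%N)
  (x : nat -> R -> R -> R) (hx : is_rec_coeff nu x)
  (U : set R) (hU : nbhs (1 : R) U) (HG : genus_expansion nu x P U)
  (a : R) (ha : U a) (xi : R) (hxi : 0 < xi) (m : nat) :
  exists K : R, exists n0 : nat, forall n : nat, (n0 <= n)%N ->
    `| x n (n%:R / a) (n%:R ^+ (nu - 1) / xi)
       - a * \sum_(g < m.+1)
               Zg nu P g ((a ^+ (nu - 1) / xi) * n%:R ^+ (nu - 1)) / n%:R ^+ (2 * g) |
    < K / (n%:R `^ ((2 * m + 2)%:R + (nu - 1)%:R / nu%:R)).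
Proof.
have hnu1 : (1 <= nu)%N by apply: ltnW.
have [K1 [n0 HK]] := HG a ha m.+1.
set gam := a ^+ (nu - 1) / xi.
set M := \sum_(i < size (P m.+1)) `|(P m.+1)`_i|.
set D := ((cnu R nu * `|gam|)^-1) `^ (nu%:R^-1).
exists (K1 + `|a| * M * D), (maxn n0 1) => n hn.
have hn0 : (n0 <= n)%N by apply: leq_trans hn; apply: leq_maxl.
have hn1 : (0 < n)%N by apply: leq_trans hn; apply: leq_maxr.
have npos : 0 < n%:R :> R by rewrite ltr0n.
have := HK n hn0 (n%:R ^+ (nu - 1) / xi) (divr_gt0 (exprn_gt0 _ npos) hxi).
rewrite (_ : a ^+ (nu - 1) * (n%:R ^+ (nu - 1) / xi) = gam * n%:R ^+ (nu - 1)); last first.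
  by rewrite /gam mulrA [RHS]mulrAC.
move=> hK.
set S := \sum_(i < m.+1) _.
pose y : R := gam * n%:R ^+ (nu - 1).
pose z := Zg nu P m.+1 y.
set X := x n _ _.
pose N : R := n%:R ^+ (2 * m + 2).
pose pe : R := n%:R `^ ((nu - 1)%:R / nu%:R).
have e1 : n%:R ^+ (2 * m.+1) = N by rewrite /N; congr (_ ^+ _); lia.
have e2 : n%:R ^+ (2 * m.+1 + 2) = N * n%:R ^+ 2.
  by rewrite /N -exprD; congr (_ ^+ _); lia.
have {}hK : `|X - a * (S + z / N)| < K1 / (N * n%:R ^+ 2).
  rewrite -e2 -e1; move: hK; rewrite big_ord_recr; exact.
have hE : n%:R `^ ((2 * m + 2)%:R + (nu - 1)%:R / nu%:R) = N * pe.
  rewrite powRD ?powR_mulrn ?(ltW npos) //.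
  by apply/implyP => _; rewrite gt_eqF.
rewrite hE.
have N0 : 0 < N by rewrite exprn_gt0.
have pe0 : 0 < pe by rewrite powR_gt0.
have n1 : 1 <= n%:R :> R by rewrite ler1n.
have hpe : pe <= n%:R ^+ 2.
  apply: (@le_trans _ _ (n%:R `^ 1)).
    apply: ler_powR => //.
    rewrite ler_pdivrMr ?ltr0n ?mul1r ?ler_nat ?leq_subr //.
  by rewrite powRr1 ?(ltW npos) // expr2 -{1}[n%:R]mulr1 ler_pM2l.
have M0 : 0 <= M by apply: sumr_ge0 => i _; exact: normr_ge0.
have D0 : 0 <= D by apply: powR_ge0.
have hz : `|z| * pe <= M * D.
  case: (eqVneq (Z0 nu y) 1) => hZ.
    by rewrite /z Zg_one // normr0 mul0r mulr_ge0.
  have := @Zg_bound R nu P m.+1 y hnu1 (ltn0Sn m); rewrite -/z -/M => hb.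
  have hd := @Z0_decay R nu gam n%:R hnu1 npos hZ.
  apply: (le_trans (ler_wpM2r (ltW pe0) hb)); rewrite -mulrA ler_wpM2l //.
have hA : `|X - a * S| <= `|X - a * (S + z / N)| + `|a * (z / N)|.
  have -> : X - a * S = (X - a * (S + z / N)) + a * (z / N) by ring.
  exact: ler_normD.
have K0 : 0 < K1.
  have : 0 < K1 / (N * n%:R ^+ 2) by apply: le_lt_trans hK.
  by rewrite pmulr_lgt0 // invr_gt0 mulr_gt0 // exprn_gt0.
have h1 : K1 / (N * n%:R ^+ 2) <= K1 / (N * pe).
  rewrite ler_pM2l // lef_pV2 ?posrE ?mulr_gt0 ?exprn_gt0 //.
  by rewrite ler_pM2l.
have h2 : `|a * (z / N)| <= `|a| * M * D / (N * pe).
  have -> : `|a * (z / N)| = `|a| * (`|z| * pe) / (N * pe).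
    rewrite normrM normf_div (gtr0_norm N0); field.
    by rewrite !gt_eqF.
  apply: ler_wpM2r; first by rewrite invr_ge0 ltW // mulr_gt0.
  by rewrite -mulrA ler_wpM2l.
rewrite mulrDl; lra.
Qed.
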